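(* A $\star$-metric space $(X,d^\star)$ is complete if and only if for every decreasing sequence $F_1\supseteq F_2\supseteq F_3\supseteq\cdots$ of nonempty closed subsets of $X$ with $\lim_{n\to\infty}\delta(F_n)=0$, the intersection $\bigcap_{n=1}^\infty F_n$ is a one-point set.
   Context: A $t$-definer is a function $\star:[0,\infty)\times[0,\infty)\to[0,\infty)$ such that for all $a,b,c\ge 0$: $a\star b=b\star a$; $a\star(b\star c)=(a\star b)\star c$; if $a\le b$ then $a\star c\le b\star c$; $a\star 0=a$; and $\star$ is continuous in its first variable with respect to the Euclidean topology. Given a nonempty set $X$ and a $t$-definer $\star$, a $\star$-metric on $X$ is a function $d^\star:X\times X\to[0,\infty)$ such that for all $x,y,z\in X$: $d^\star(x,y)=0$ iff $x=y$; $d^\star(x,y)=d^\star(y,x)$; and $d^\star(x,y)\le d^\star(x,z)\star d^\star(z,y)$. Closedness refers to the topology $\mathscr{T}_{d^\star}$ consisting of all $U\subseteq X$ such that for each $a\in U$ there is $r>0$ with $\{x: d^\star(a,x)<r\}\subseteq U$. The diameter of $A\subseteq X$ is $\delta(A)=\sup_{x,y\in A}d^\star(x,y)$ (possibly $\infty$), with $\delta(\emptyset)=0$. A sequence $\{x_n\}$ is Cauchy if for every $\epsilon>0$ there is $k$ with $d^\star(x_n,x_m)<\epsilon$ for all $m,n\ge k$; it converges to $x$ if for every $\epsilon>0$ there is $k$ with $d^\star(x,x_n)<\epsilon$ for $n\ge k$. $(X,d^\star)$ is complete if every Cauchy sequence converges to a point of $X$. *)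

(* Defs.v *)
From Stdlib Require Import Reals.
Open Scope R_scope.

(* A t-definer: an operation on [0,oo), modelled as a function R -> R -> R
   whose axioms are required on nonnegative arguments. *)
Record t_definer (star : R -> R -> R) : Prop := {
  td_nonneg : forall a b, 0 <= a -> 0 <= b -> 0 <= star a b;
  td_comm : forall a b, 0 <= a -> 0 <= b -> star a b = star b a;
  td_assoc : forall a b c, 0 <= a -> 0 <= b -> 0 <= c ->
      star a (star b c) = star (star a b) c;
  td_mono : forall a b c, 0 <= a -> 0 <= b -> 0 <= c -> a <= b ->
      star a c <= star b c;
  td_zero : forall a, 0 <= a -> star a 0 = a;
  td_cont : forall c a, 0 <= c -> 0 <= a ->
      forall eps, 0 < eps -> exists delta, 0 < delta /\
        forall a', 0 <= a' -> Rabs (a' - a) < delta ->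
          Rabs (star a' c - star a c) < eps
}.

Record star_metric {X : Type} (star : R -> R -> R) (d : X -> X -> R) : Prop := {
  sm_nonneg : forall x y, 0 <= d x y;
  sm_zero : forall x y, d x y = 0 <-> x = y;
  sm_sym : forall x y, d x y = d y x;
  sm_tri : forall x y z, d x y <= star (d x z) (d z y)
}.

Section StarMetric.
Context {X : Type} (d : X -> X -> R).

Definition sm_open (U : X -> Prop) : Prop :=
  forall a, U a -> exists r, 0 < r /\ forall x, d a x < r -> U x.

Definition sm_closed (F : X -> Prop) : Prop := sm_open (fun x => ~ F x).

Definition cauchy (u : nat -> X) : Prop :=
  forall eps, 0 < eps -> exists k, forall n m, (k <= n)%nat -> (k <= m)%nat ->
    d (u n) (u m) < eps.

Definition converges_to (u : nat -> X) (x : X) : Prop :=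
  forall eps, 0 < eps -> exists k, forall n, (k <= n)%nat -> d x (u n) < eps.

Definition complete : Prop :=
  forall u, cauchy u -> exists x, converges_to u x.

(* delta(A) < e, where delta(A) = sup_{x,y in A} d x y in [0,oo]
   (with delta(empty) = 0): there is a finite bound r < e on all distances. *)
Definition diam_lt (A : X -> Prop) (e : R) : Prop :=
  exists r, r < e /\ 0 <= r /\ forall x y, A x -> A y -> d x y <= r.

(* lim_{n -> oo} delta(F n) = 0  (delta >= 0, so this is: eventually delta < eps) *)
Definition diam_tends_to_0 (F : nat -> X -> Prop) : Prop :=
  forall eps, 0 < eps -> exists N, forall n, (N <= n)%nat -> diam_lt (F n) eps.

End StarMetric.

(* Main.v *)
Require Import Defs.
From Stdlib Require Import Reals.
From Stdlib Require Import Lra Lia Classical ClassicalEpsilon.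
Open Scope R_scope.

Lemma star_mono2 (star : R -> R -> R) : t_definer star ->
  forall a b b', 0 <= a -> 0 <= b -> b <= b' -> star a b <= star a b'.
Proof.
  intros Hs a b b' ha hb hbb.
  rewrite (td_comm _ Hs a b) by lra. rewrite (td_comm _ Hs a b') by lra.
  apply (td_mono _ Hs); lra.
Qed.

Lemma star_near (star : R -> R -> R) : t_definer star ->
  forall c, 0 <= c -> forall e, 0 < e -> exists del, 0 < del /\
    forall a b, 0 <= a -> a < del -> 0 <= b -> b <= c -> star a b < c + e.
Proof.
  intros Hs c hc e he.
  destruct (td_cont _ Hs c 0 hc (Rle_refl 0) e he) as [del [hd H]].
  exists del; split; auto.
  intros a b ha had hb hbc.
  assert (H0 : star 0 c = c).
  { rewrite (td_comm _ Hs) by lra. apply (td_zero _ Hs); lra. }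
  assert (H1 := H a ha).
  rewrite Rminus_0_r, Rabs_right in H1 by lra.
  specialize (H1 had). rewrite H0 in H1.
  assert (star a b <= star a c) by (apply (star_mono2 _ Hs); lra).
  apply Rabs_def2 in H1. lra.
Qed.

Theorem theorem4p9 (X : Type) (star : R -> R -> R) (d : X -> X -> R) :
  inhabited X -> t_definer star -> star_metric star d ->
  (complete d <->
   forall F : nat -> X -> Prop,
     (forall n x, F (S n) x -> F n x) ->
     (forall n, exists x, F n x) ->
     (forall n, sm_closed d (F n)) ->
     diam_tends_to_0 d F ->
     exists x, forall y, (forall n, F n y) <-> y = x).
Proof.
  intros _ Hs Hm.
  assert (Hnn := sm_nonneg _ _ Hm).
  assert (Htri := sm_tri _ _ Hm).
  assert (Hsym := sm_sym _ _ Hm).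
  assert (H0 : forall x, d x x = 0) by (intro x; apply (sm_zero _ _ Hm); reflexivity).
  split.
  - intros Hc F Hdec Hne Hcl Hdiam.
    assert (Hnest : forall n m x, (n <= m)%nat -> F m x -> F n x).
    { intros n m x hnm. induction hnm; auto. }
    set (u := fun n => proj1_sig (constructive_indefinite_description _ (Hne n))).
    assert (Hu : forall n, F n (u n)).
    { intro n. unfold u. destruct (constructive_indefinite_description _ (Hne n)); auto. }
    assert (Hcau : cauchy d u).
    { intros eps he. destruct (Hdiam eps he) as [N HN].
      exists N. intros n m hn hm.
      destruct (HN N (le_n N)) as [r [hr1 [hr2 hr3]]].
      assert (d (u n) (u m) <= r); [|lra].
      apply hr3; [apply (Hnest N n) | apply (Hnest N m)]; auto. }
    destruct (Hc u Hcau) as [x Hx].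
    assert (HxF : forall n, F n x).
    { intro n. apply NNPP; intro H.
      destruct (Hcl n x H) as [r [hr Hb]].
      destruct (Hx r hr) as [k Hk].
      apply (Hb (u (max n k))). apply Hk; lia.
      apply (Hnest n (max n k)); [lia | apply Hu]. }
    exists x. intro y. split.
    + intro Hy.
      assert (d y x = 0).
      { destruct (Rle_lt_or_eq_dec 0 (d y x) (Hnn y x)) as [Hp|Hp]; [|auto].
        exfalso. destruct (Hdiam _ Hp) as [N HN].
        destruct (HN N (le_n N)) as [r [hr1 [hr2 hr3]]].
        specialize (hr3 y x (Hy N) (HxF N)). lra. }
      apply (sm_zero _ _ Hm); auto.
    + intros ->. exact HxF.
  - intros HF u Hu.
    set (F := fun n x => forall r, 0 < r -> exists m, (n <= m)%nat /\ d x (u m) < r).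
    destruct (HF F) as [x Hx].
    + intros n x H r hr. destruct (H r hr) as [m [hm h]]. exists m; split; [lia|auto].
    + intro n. exists (u n). intros r hr. exists n. split; [lia|]. rewrite H0; auto.
    + intros n x Hnx.
      apply NNPP; intro Hc. apply Hnx. intros r hr.
      apply NNPP; intro Hmm. apply Hc.
      destruct (star_near _ Hs (r/2) ltac:(lra) (r/2) ltac:(lra)) as [del [hd Hd]].
      exists (Rmin del (r/2)). split; [apply Rmin_glb_lt; lra|].
      intros y hy Fy.
      assert (hmin1 := Rmin_l del (r/2)). assert (hmin2 := Rmin_r del (r/2)).
      destruct (Fy (Rmin del (r/2)) ltac:(apply Rmin_glb_lt; lra)) as [m [hm h]].
      apply Hmm. exists m. split; auto.
      assert (star (d x y) (d y (u m)) < r/2 + r/2).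
      { apply Hd; auto; lra. }
      specialize (Htri x (u m) y). lra.
    + intros eps he.
      destruct (Hu (eps/4) ltac:(lra)) as [N HN].
      exists N. intros n hn. exists (eps/2). split; [lra|]. split; [lra|].
      intros a b Fa Fb.
      destruct (star_near _ Hs (eps/4) ltac:(lra) (eps/8) ltac:(lra)) as [d1 [hd1 Hd1]].
      destruct (star_near _ Hs (3*eps/8) ltac:(lra) (eps/8) ltac:(lra)) as [d2 [hd2 Hd2]].
      destruct (Fa d2 hd2) as [m [hm ham]].
      destruct (Fb d1 hd1) as [k [hk hbk]].
      assert (Hmk : d (u m) (u k) < eps/4) by (apply HN; lia).
      assert (Hin : star (d (u m) (u k)) (d (u k) b) < eps/4 + eps/8).
      { rewrite (td_comm _ Hs) by auto. apply Hd1; auto. rewrite Hsym; auto. lra. }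
      assert (Hout : star (d a (u m)) (star (d (u m) (u k)) (d (u k) b)) < 3*eps/8 + eps/8).
      { apply Hd2; auto; [apply (td_nonneg _ Hs); auto|lra]. }
      assert (d (u m) b <= star (d (u m) (u k)) (d (u k) b)) by apply Htri.
      assert (star (d a (u m)) (d (u m) b) <= star (d a (u m)) (star (d (u m) (u k)) (d (u k) b))).
      { apply (star_mono2 _ Hs); auto. }
      specialize (Htri a b (u m)). lra.
    + exists x.
      assert (HxF : forall n, F n x) by (apply Hx; reflexivity).
      intros eps he.
      destruct (Hu (eps/2) ltac:(lra)) as [N HN].
      destruct (star_near _ Hs (eps/2) ltac:(lra) (eps/2) ltac:(lra)) as [del [hd Hd]].
      exists N. intros n hn.
      destruct (HxF N del hd) as [m [hm h]].
      assert (d (u m) (u n) < eps/2) by (apply HN; lia).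
      assert (star (d x (u m)) (d (u m) (u n)) < eps/2 + eps/2) by (apply Hd; auto; lra).
      specialize (Htri x (u n) (u m)). lra.
Qed.
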